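(* Let $A\subset\mathbb{C}^n$ be a set-germ at $0$ with $0\in\overline{A}$. Then $A$ satisfies condition (CSSP) if and only if $A$ satisfies condition (SSP) and $S^1D(A)=D(A)$, where $S^1=\{e^{i\theta}:\theta\in\mathbb{R}\}$. Consequently, if $A$ satisfies condition (SSP), then both $S^1A$ and $\mathbb{C}A$ satisfy condition (CSSP).
   Context: Identify $\mathbb{C}^n$ with $\mathbb{R}^{2n}$. For a set-germ $A$ at $0$ with $0\in\overline A$, $D(A)=\{a\in S^{2n-1}:\exists\, x_i\in A\setminus\{0\},\ x_i\to0,\ x_i/\|x_i\|\to a\}$, and the complex tangent cone is $LD^*(A)=\{v\in\mathbb{C}^n:\exists\, c_i\in\mathbb{C},\ \exists\, v_i\in A\setminus\{0\},\ v_i\to0,\ c_iv_i\to v\}$. For sequences, $\|u_m\|\ll\|v_m\|,\|w_m\|$ means $\|u_m\|/\|v_m\|\to0$ and $\|u_m\|/\|w_m\|\to0$. $A$ satisfies condition (SSP) if for every sequence $a_m\to0$ with $\lim a_m/\|a_m\|\in D(A)$ there is a sequence $b_m\in A$ with $\|a_m-b_m\|\ll\|a_m\|,\|b_m\|$. $A$ satisfies condition (CSSP) if for every sequence $a_m\in\mathbb{C}^n$ tending to $0$ with $\lim a_m/\|a_m\|\in LD^*(A)$ there is a sequence $b_m\in A$ with $\|a_m-b_m\|\ll\|a_m\|,\|b_m\|$. Here $S^1D(A)=\{ca: c\in S^1, a\in D(A)\}$, $S^1A=\{ca:c\in S^1,a\in A\}$, $\mathbb{C}A=\{ca:c\in\mathbb{C},a\in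 A\}$. *)

(* Defs.v *)
(* R : realType, complex numbers R[i] (mathcomp-real-closed),
   C^n = 'rV[R[i]]_n, identified with R^{2n} via the Euclidean norm below. *)
From mathcomp Require Import all_boot all_order all_algebra all_classical all_reals.
From mathcomp Require Import complex.
Set Implicit Arguments. Unset Strict Implicit. Unset Printing Implicit Defensive.
Import Order.TTheory GRing.Theory Num.Theory.
Local Open Scope ring_scope.

Section Defs.
Variables (R : realType) (n : nat).
Local Notation pt := 'rV[R[i]]_n.

Definition cnorm (x : pt) : R :=
  Num.sqrt (\sum_(j < n) (complex.Re (x 0 j) ^+ 2 + complex.Im (x 0 j) ^+ 2)).

Definition cvg_pt (u : nat -> pt) (l : pt) : Prop :=
  forall e : R, 0 < e -> exists N, forall m, (N <= m)%N -> cnorm (u m - l) < e.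

Definition nrmz (x : pt) : pt := (Complex (cnorm x)^-1 0) *: x.

Definition zero_in_closure (A : pt -> Prop) : Prop :=
  forall e : R, 0 < e -> exists x, A x /\ cnorm x < e.

Definition Dset (A : pt -> Prop) (a : pt) : Prop :=
  cnorm a = 1 /\
  exists x : nat -> pt, (forall i, A (x i) /\ x i <> 0) /\
    cvg_pt x 0 /\ cvg_pt (fun i => nrmz (x i)) a.

Definition LDstar (A : pt -> Prop) (v : pt) : Prop :=
  exists (c : nat -> R[i]) (w : nat -> pt), (forall i, A (w i) /\ w i <> 0) /\
    cvg_pt w 0 /\ cvg_pt (fun i => c i *: w i) v.

(* ||a_m - b_m|| << ||a_m||, ||b_m|| : both ratios tend to 0
   (stated without division) *)
Definition negligible (a b : nat -> pt) : Prop :=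
  forall e : R, 0 < e -> exists N, forall m, (N <= m)%N ->
    cnorm (a m - b m) <= e * cnorm (a m) /\ cnorm (a m - b m) <= e * cnorm (b m).

Definition approach_dir (S : pt -> Prop) (a : nat -> pt) : Prop :=
  (forall m, a m <> 0) /\ cvg_pt a 0 /\
  exists l, cvg_pt (fun m => nrmz (a m)) l /\ S l.

Definition SSP (A : pt -> Prop) : Prop :=
  forall a : nat -> pt, approach_dir (Dset A) a ->
    exists b : nat -> pt, (forall m, A (b m)) /\ negligible a b.

Definition CSSP (A : pt -> Prop) : Prop :=
  forall a : nat -> pt, approach_dir (LDstar A) a ->
    exists b : nat -> pt, (forall m, A (b m)) /\ negligible a b.

Definition S1mul (X : pt -> Prop) (y : pt) : Prop :=
  exists (c : R[i]) (x : pt), `|c| = 1 /\ X x /\ y = c *: x.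

Definition Cmul (X : pt -> Prop) (y : pt) : Prop :=
  exists (c : R[i]) (x : pt), X x /\ y = c *: x.

End Defs.

(* Main.v *)
Set Warnings "-all".
Require Import Defs.
From mathcomp Require Import all_boot all_order all_algebra all_classical all_reals.
From mathcomp Require Import complex.
From mathcomp Require Import topology normedtype sequences.
From mathcomp Require Import ring lra.
Import ComplexField.Normc.
Import Order.TTheory GRing.Theory Num.Theory.
Import numFieldNormedType.Exports.
Local Open Scope ring_scope.
Set Implicit Arguments. Unset Strict Implicit.
Section A.
Variables (R : realType) (n : nat).
Local Notation pt := 'rV[R[i]]_n.
Local Notation Re := complex.Re.
Local Notation Im := complex.Im.
Implicit Types x y : pt.
Definition sqn (x : pt) : R := \sum_(j < n) (Re (x 0 j) ^+ 2 + Im (x 0 j) ^+ 2).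

Lemma sqn_ge0 x : 0 <= sqn x.
Proof. by apply: sumr_ge0 => j _; rewrite addr_ge0 // sqr_ge0. Qed.

Lemma cnormE x : cnorm x = Num.sqrt (sqn x). Proof. by []. Qed.

Lemma cnorm_ge0 x : 0 <= cnorm x. Proof. exact: sqrtr_ge0. Qed.

Lemma cnorm_sq x : cnorm x ^+ 2 = sqn x.
Proof. by rewrite cnormE sqr_sqrtr // sqn_ge0. Qed.

Lemma cnorm0 : cnorm (0 : pt) = 0.
Proof.
rewrite cnormE /sqn (eq_bigr (fun _ => 0)) ?big1 ?sqrtr0 // => j _.
by rewrite mxE /= expr0n /= addr0.
Qed.

Lemma cnorm_eq0 x : cnorm x = 0 -> x = 0.
Proof.
move=> h; have : sqn x = 0 by rewrite -cnorm_sq h expr0n.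
move=> /eqP; rewrite psumr_eq0; last by move=> j _; rewrite addr_ge0 // sqr_ge0.
move=> /allP H; apply/matrixP => i j; rewrite (ord1 i) mxE.
have /H : j \in index_enum 'I_n by rewrite mem_index_enum.
rewrite /= paddr_eq0 ?sqr_ge0 // !sqrf_eq0 => /andP[/eqP h1 /eqP h2].
by move: (x 0 j) h1 h2 => [a b] /= -> ->.
Qed.

Lemma cnorm_neq0 x : x <> 0 -> 0 < cnorm x.
Proof.
move=> hx; rewrite lt_neqAle cnorm_ge0 andbT eq_sym; apply/eqP => /cnorm_eq0.
exact: hx.
Qed.

Lemma sqC (c z : R[i]) : Re (c * z) ^+ 2 + Im (c * z) ^+ 2 = (Re c ^+2 + Im c ^+ 2) * (Re z ^+ 2 + Im z ^+ 2).
Proof. case: c => a b; case: z => x y /=. ring. Qed.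

Lemma normc_sq (c : R[i]) : normc c ^+ 2 = Re c ^+2 + Im c ^+ 2.
Proof. by case: c => a b /=; rewrite sqr_sqrtr // addr_ge0 // sqr_ge0. Qed.

Lemma normc_ge0 (c : R[i]) : 0 <= normc c.
Proof. by case: c => a b /=; apply: sqrtr_ge0. Qed.

Lemma cnormZ (c : R[i]) x : cnorm (c *: x) = normc c * cnorm x.
Proof.
rewrite !cnormE /sqn (eq_bigr (fun j => (Re c ^+2 + Im c ^+ 2) * (Re (x 0 j) ^+ 2 + Im (x 0 j) ^+ 2))).
  rewrite -mulr_sumr sqrtrM; last by rewrite addr_ge0 // sqr_ge0.
  by rewrite -normc_sq sqrtr_sqr ger0_norm // normc_ge0.
by move=> j _; rewrite mxE sqC.
Qed.

Lemma cnormN x : cnorm (- x) = cnorm x.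
Proof.
rewrite -scaleN1r cnormZ; suff -> : normc (-1 : R[i]) = 1 by rewrite mul1r.
by rewrite normcN normc1.
Qed.

Lemma cnormB x y : cnorm (x - y) = cnorm (y - x).
Proof. by rewrite -cnormN opprB. Qed.

Lemma CS (a b c d : 'I_n -> R) :
  \sum_j (a j * c j + b j * d j) <=
  Num.sqrt (\sum_j (a j ^+ 2 + b j ^+ 2)) * Num.sqrt (\sum_j (c j ^+ 2 + d j ^+ 2)).
Proof.
set Sa := \sum_j (a j ^+ 2 + b j ^+ 2); set Sc := \sum_j (c j ^+ 2 + d j ^+ 2).
have Sa0 : 0 <= Sa by apply: sumr_ge0 => j _; rewrite addr_ge0 // sqr_ge0.
have Sc0 : 0 <= Sc by apply: sumr_ge0 => j _; rewrite addr_ge0 // sqr_ge0.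
set al := Num.sqrt Sa; set be := Num.sqrt Sc.
have al0 : 0 <= al by apply: sqrtr_ge0.
have be0 : 0 <= be by apply: sqrtr_ge0.
have hal : al ^+ 2 = Sa by rewrite sqr_sqrtr.
have hbe : be ^+ 2 = Sc by rewrite sqr_sqrtr.
have key : 2 * al * be * \sum_j (a j * c j + b j * d j) <= 2 * al ^+ 2 * be ^+ 2.
  have -> : 2 * al ^+ 2 * be ^+ 2 = be ^+ 2 * Sa + al ^+ 2 * Sc.
    by rewrite hal hbe; ring.
  rewrite /Sa /Sc !mulr_sumr -big_split /=; apply: ler_sum => j _.
  rewrite -subr_ge0.
  have -> : be ^+ 2 * (a j ^+ 2 + b j ^+ 2) + al ^+ 2 * (c j ^+ 2 + d j ^+ 2) -
    2 * al * be * (a j * c j + b j * d j) = (be * a j - al * c j) ^+ 2 + (be * b j - al * d j) ^+ 2.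
    by ring.
  by rewrite addr_ge0 // sqr_ge0.
have [al_eq0|al_gt0] := eqVneq al 0.
  have : Sa = 0 by rewrite -hal al_eq0 expr0n.
  move=> /eqP; rewrite psumr_eq0; last by move=> j _; rewrite addr_ge0 // sqr_ge0.
  move=> /allP H; rewrite al_eq0 mul0r big1 // => j _.
  have /H : j \in index_enum 'I_n by rewrite mem_index_enum.
  rewrite /= paddr_eq0 ?sqr_ge0 // !sqrf_eq0 => /andP[/eqP -> /eqP ->].
  by rewrite !mul0r addr0.
have [be_eq0|be_gt0] := eqVneq be 0.
  have : Sc = 0 by rewrite -hbe be_eq0 expr0n.
  move=> /eqP; rewrite psumr_eq0; last by move=> j _; rewrite addr_ge0 // sqr_ge0.
  move=> /allP H; rewrite be_eq0 mulr0 big1 // => j _.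
  have /H : j \in index_enum 'I_n by rewrite mem_index_enum.
  rewrite /= paddr_eq0 ?sqr_ge0 // !sqrf_eq0 => /andP[/eqP -> /eqP ->].
  by rewrite !mulr0 addr0.
have p : 0 < 2 * al * be by rewrite !mulr_gt0 // lt_neqAle eq_sym ?al_gt0 ?be_gt0.
rewrite -(ler_pM2l p); apply: (le_trans key); rewrite le_eqVlt; apply/orP; left.
apply/eqP; ring.
Qed.

Lemma cnormD x y : cnorm (x + y) <= cnorm x + cnorm y.
Proof.
rewrite -(ler_pXn2r (n:=2)) //; last 2 first.
- by rewrite nnegrE cnorm_ge0.
- by rewrite nnegrE addr_ge0 // cnorm_ge0.
rewrite sqrrD !cnorm_sq /sqn.
have -> : \sum_(j < n) (Re ((x + y) 0 j) ^+ 2 + Im ((x + y) 0 j) ^+ 2) =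
  \sum_(j < n) (Re (x 0 j) ^+ 2 + Im (x 0 j) ^+ 2) + \sum_(j < n) (Re (y 0 j) ^+ 2 + Im (y 0 j) ^+ 2)
  + 2 * \sum_(j < n) (Re (x 0 j) * Re (y 0 j) + Im (x 0 j) * Im (y 0 j)).
  rewrite mulr_sumr -!big_split /=; apply: eq_bigr => j _; rewrite mxE.
  case: (x 0 j) => a b; case: (y 0 j) => c d /=; ring.
set Z := \sum_(j < n) (Re (x 0 j) * Re (y 0 j) + Im (x 0 j) * Im (y 0 j)).
suff : Z <= cnorm x * cnorm y.
  move=> h; rewrite mulr2n mulrDl !mul1r; lra.
exact: (CS (fun j => Re (x 0 j)) (fun j => Im (x 0 j)) (fun j => Re (y 0 j)) (fun j => Im (y 0 j))).
Qed.
End A.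
Section B.
Variables (R : realType) (n : nat).
Local Notation pt := 'rV[R[i]]_n.
Local Notation Re := complex.Re.
Local Notation Im := complex.Im.
Implicit Types x y l : pt.

Lemma cnorm_lb x y : cnorm x - cnorm y <= cnorm (x - y).
Proof.
have := cnormD (x - y) y; rewrite subrK; lra.
Qed.

Lemma cnorm_abs x y : `|cnorm x - cnorm y| <= cnorm (x - y).
Proof.
rewrite ler_norml cnorm_lb andbT; have := cnorm_lb y x; rewrite cnormB; lra.
Qed.

Lemma normcR (r : R) : normc (Complex r 0) = `|r|.
Proof. by rewrite /= expr0n /= addr0 sqrtr_sqr. Qed.

Lemma cmulR (a b : R) : Complex a 0 * Complex b 0 = Complex (a * b) 0 :> R[i].
Proof. by apply/eqP; rewrite eq_complex /= !mulr0 !mul0r subr0 addr0 !eqxx. Qed.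

Lemma csubR (a b : R) : Complex a 0 - Complex b 0 = Complex (a - b) 0 :> R[i].
Proof. by apply/eqP; rewrite eq_complex /= oppr0 addr0 !eqxx. Qed.

Lemma cone : Complex 1 0 = 1 :> R[i]. Proof. by []. Qed.

Lemma cnorm_nrmz x : x <> 0 -> cnorm (nrmz x) = 1.
Proof.
move=> hx; rewrite /nrmz cnormZ normcR ger0_norm ?invr_ge0 ?cnorm_ge0 //.
by rewrite mulVf // gt_eqF // cnorm_neq0.
Qed.

Lemma nrmz_unit l : cnorm l = 1 -> nrmz l = l.
Proof. by move=> h; rewrite /nrmz h invr1 cone scale1r. Qed.

Lemma nrmz_split x : x = Complex (cnorm x) 0 *: nrmz x.
Proof.
rewrite /nrmz scalerA cmulR.
have [->|hx] := eqVneq x 0; first by rewrite scaler0.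
rewrite mulfV ?cone ?scale1r // gt_eqF // cnorm_neq0 //; exact/eqP.
Qed.

Lemma nrmz_close x y : x <> 0 -> y <> 0 ->
  cnorm (nrmz x - nrmz y) <= 2 * cnorm (x - y) / cnorm x.
Proof.
move=> hx hy; set X := cnorm x; set Y := cnorm y.
have X0 : 0 < X by apply: cnorm_neq0.
have Y0 : 0 < Y by apply: cnorm_neq0.
have -> : nrmz x - nrmz y = Complex X^-1 0 *: (x - y) + Complex (X^-1 - Y^-1) 0 *: y.
  by rewrite -csubR scalerBl scalerBr addrA subrK.
apply: (le_trans (cnormD _ _)); rewrite !cnormZ !normcR.
have e : (X^-1 - Y^-1) * Y = (Y - X) / X.
  by field; rewrite !gt_eqF.
have -> : `|X^-1 - Y^-1| * Y = `|Y - X| / X.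
  have -> : `|X^-1 - Y^-1| * Y = `|(X^-1 - Y^-1) * Y| by rewrite normrM (ger0_norm (ltW Y0)).
  have Xi : 0 <= X^-1 by rewrite invr_ge0 ltW.
  by rewrite e normrM (ger0_norm Xi).
have h1 : `|Y - X| <= cnorm (x - y) by rewrite cnormB; apply: cnorm_abs.
rewrite ger0_norm ?invr_ge0 ?(ltW X0) //.
have Xi : 0 < X^-1 by rewrite invr_gt0.
set c := cnorm (x - y).
have -> : 2 * c / X = c * X^-1 + c / X by rewrite -mulrA mulr2n !mulrDl !mul1r mulrC.
rewrite (mulrC X^-1) lerD2l ler_pM2r //.
Qed.

Lemma nrmz_close1 y l : cnorm l = 1 -> cnorm (y - l) <= 2^-1 ->
  cnorm (nrmz y - l) <= 4 * cnorm (y - l).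
Proof.
move=> hl hyl.
have hy : 2^-1 <= cnorm y.
  have := cnorm_lb l y; rewrite cnormB hl; lra.
have y0 : y <> 0.
  move=> e; move: hy; rewrite e cnorm0; lra.
have l0 : l <> 0 by move=> e; move: hl; rewrite e cnorm0; lra.
have := nrmz_close y0 l0; rewrite (nrmz_unit hl) => h; apply: (le_trans h).
have cy : 0 < cnorm y by lra.
rewrite ler_pdivrMr //.
have := cnorm_ge0 (y - l); nra.
Qed.

Definition ev (P : nat -> Prop) := exists N, forall m, (N <= m)%N -> P m.

Lemma ev_and P Q : ev P -> ev Q -> ev (fun m => P m /\ Q m).
Proof.
move=> [N1 h1] [N2 h2]; exists (maxn N1 N2) => m hm; split.
- by apply: h1; apply: leq_trans hm; apply: leq_maxl.
- by apply: h2; apply: leq_trans hm; apply: leq_maxr.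
Qed.

Lemma ev_mono (P Q : nat -> Prop) : (forall m, P m -> Q m) -> ev P -> ev Q.
Proof. by move=> h [N hN]; exists N => m /hN /h. Qed.

Lemma cvg_close u v l : cvg_pt u l ->
  (forall e : R, 0 < e -> ev (fun m => cnorm (v m - u m) < e)) -> cvg_pt v l.
Proof.
move=> hu hv e e0.
have e2 : 0 < e / 2 by rewrite divr_gt0.
have [N hN] := ev_and (hu _ e2) (hv _ e2).
exists N => m /hN [h1 h2].
have -> : v m - l = (v m - u m) + (u m - l) by rewrite addrA subrK.
apply: (le_lt_trans (cnormD _ _)); lra.
Qed.

Lemma cvg_comp u l (f : nat -> nat) : cvg_pt u l -> (forall k, (k <= f k)%N) ->
  cvg_pt (fun k => u (f k)) l.
Proof.
move=> hu hf e e0; have [N hN] := hu _ e0; exists N => k hk.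
by apply: hN; apply: leq_trans hk (hf k).
Qed.

Lemma cvg_Z u l (c : R[i]) : cvg_pt u l -> cvg_pt (fun m => c *: u m) (c *: l).
Proof.
move=> hu e e0.
have c0 := normc_ge0 c.
have e1 : 0 < e / (normc c + 1) by rewrite divr_gt0 // ltr_wpDl.
have [N hN] := hu _ e1; exists N => m /hN h.
rewrite -scalerBr cnormZ.
have : normc c * cnorm (u m - l) <= normc c * (e / (normc c + 1)).
  by rewrite ler_wpM2l // ltW.
move=> h2; apply: (le_lt_trans h2).
rewrite mulrA ltr_pdivrMr ?ltr_wpDl // mulrDr mulr1 mulrC ltrDl //.
Qed.

Lemma cvg_unit u l : cvg_pt u l -> (forall m, cnorm (u m) = 1) -> cnorm l = 1.
Proof.
move=> hu h1; case: (eqVneq (cnorm l) 1) => // hne.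
have p : 0 < `|cnorm l - 1| by rewrite normr_gt0 subr_eq0.
have [N hN] := hu _ p.
have := hN N (leqnn N); have := cnorm_abs l (u N); rewrite h1 cnormB; lra.
Qed.

Lemma cvg_nrmz u l : cvg_pt u l -> cnorm l = 1 -> cvg_pt (fun m => nrmz (u m)) l.
Proof.
move=> hu hl e e0.
have e1 : 0 < Num.min (e / 8) (2^-1) by rewrite lt_min divr_gt0 //= invr_gt0.
have [N hN] := hu _ e1; exists N => m /hN.
rewrite lt_min => /andP[h1 h2].
have := nrmz_close1 hl (ltW h2); lra.
Qed.
End B.
Section C.
Variable R : realType.
Lemma BW1 (s : nat -> R) : (forall i, `|s i| <= 1) ->
  exists (p : R) (f : nat -> nat), (forall k, (k <= f k)%N) /\
    (forall e : R, 0 < e -> exists N, forall k, (N <= k)%N -> `|s (f k) - p| < e).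
Proof.
move=> hs.
have hb : bounded_fun s.
  exists 1; split => // M hM x _; apply: (le_trans (hs x)); exact: ltW.
have [f finc] := bolzano_weierstrass hb.
move=> /cvg_ex [p hp]; exists p, f; split.
  elim=> [|k IH] //; have h : ~~ (f k.+1 <= f k)%N.
    by have := finc k.+1 k; rewrite leEnat => ->; rewrite ltnn.
  by rewrite -ltnNge in h; apply: leq_ltn_trans h.
move=> e e0; have := (proj1 (cvgrPdist_lt _ _) hp) e e0.
move=> /(_ _) [] // N _ hN; exists N => k hk; rewrite distrC; exact: hN.
Qed.
End C.
Section C2.
Variable R : realType.
Local Notation Re := complex.Re.
Local Notation Im := complex.Im.
Lemma Re_le (z : R[i]) : `|Re z| <= normc z.
Proof.
case: z => a b /=; rewrite -sqrtr_sqr; apply: ler_wsqrtr; rewrite lerDl sqr_ge0 //.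
Qed.
Lemma Im_le (z : R[i]) : `|Im z| <= normc z.
Proof.
case: z => a b /=; rewrite -sqrtr_sqr; apply: ler_wsqrtr; rewrite lerDr sqr_ge0 //.
Qed.
Lemma normc_le (z : R[i]) : normc z <= `|Re z| + `|Im z|.
Proof.
case: z => a b /=.
have h : 0 <= `|a| + `|b| by rewrite addr_ge0.
rewrite -(ger0_norm h) -sqrtr_sqr; apply: ler_wsqrtr.
rewrite sqrrD -[a ^+ 2]real_normK ?num_real // -[b ^+ 2]real_normK ?num_real //.
rewrite -addrA lerD2l -[X in X <= _](add0r (`|b| ^+ 2)) lerD2r; apply: mulrn_wge0; exact: mulr_ge0.
Qed.
Lemma BW2 (u : nat -> R[i]) : (forall i, normc (u i) <= 1) ->
  exists (v : R[i]) (f : nat -> nat), (forall k, (k <= f k)%N) /\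
    (forall e : R, 0 < e -> exists N, forall k, (N <= k)%N -> normc (u (f k) - v) < e).
Proof.
move=> hu.
have [p1 [f1 [hf1 c1]]] := BW1 (s := fun i => Re (u i)) (fun i => le_trans (Re_le _) (hu i)).
have [p2 [g [hg c2]]] := BW1 (s := fun i => Im (u (f1 i))) (fun i => le_trans (Im_le _) (hu _)).
exists (Complex p1 p2), (fun k => f1 (g k)); split.
  by move=> k; exact: (leq_trans (hg k) (hf1 _)).
move=> e e0; have e2 : 0 < e / 2 by rewrite divr_gt0.
have [N1 h1] := c1 _ e2; have [N2 h2] := c2 _ e2.
exists (maxn N1 N2) => k hk.
have hk1 : (N1 <= g k)%N by exact: leq_trans (leq_trans (leq_maxl _ _) hk) (hg k).
have hk2 : (N2 <= k)%N by exact: leq_trans (leq_maxr _ _) hk.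
have r1 := h1 _ hk1; have r2 := h2 _ hk2; move: r1 r2 => /= r1 r2.
have := normc_le (u (f1 (g k)) - Complex p1 p2).
have -> : Re (u (f1 (g k)) - Complex p1 p2) = Re (u (f1 (g k))) - p1 by case: (u _).
have -> : Im (u (f1 (g k)) - Complex p1 p2) = Im (u (f1 (g k))) - p2 by case: (u _).
move=> hn; apply: (le_lt_trans hn).
have -> : e = e / 2 + e / 2 by field.
exact: ltrD.
Qed.
End C2.
Section D.
Variables (R : realType) (n : nat).
Local Notation pt := 'rV[R[i]]_n.
Local Notation Re := complex.Re.
Local Notation Im := complex.Im.
Implicit Types x y l : pt.

Lemma cinvR (a : R) : (Complex a 0)^-1 = Complex a^-1 0 :> R[i].
Proof.
apply/eqP; rewrite eq_complex /= expr0n /= addr0 mul0r oppr0 eqxx andbT.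
have [->|h] := eqVneq a 0; first by rewrite invr0 mul0r.
by rewrite expr2 invfM mulrA mulfV // mul1r.
Qed.

Lemma nC (c : R[i]) : `|c| = Complex (normc c) 0.
Proof. by rewrite normc_def; case: c. Qed.

Lemma normc1_of (c : R[i]) : `|c| = 1 -> normc c = 1.
Proof. by rewrite nC => -[]. Qed.

Lemma normc_abs (a b : R[i]) : `|normc a - normc b| <= normc (a - b).
Proof.
have h1 := le_normcD (a - b) b; rewrite subrK in h1.
have h2 := le_normcD (b - a) a; rewrite subrK in h2.
have e : normc (b - a) = normc (a - b) by rewrite -normcN opprB.
rewrite ler_norml; apply/andP; split; lra.
Qed.

Lemma normc_neq0 (c : R[i]) : normc c = 1 -> c != 0.
Proof. by move=> h; apply/eqP => e; move: h; rewrite e normc0 => /eqP; rewrite eq_sym oner_eq0. Qed.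

Lemma nrmz_unitZ (u : R[i]) x : normc u = 1 -> nrmz (u *: x) = u *: nrmz x.
Proof. by move=> hu; rewrite /nrmz cnormZ hu mul1r !scalerA mulrC. Qed.

Lemma LD_S1D (A : pt -> Prop) l : LDstar A l -> cnorm l = 1 ->
  exists v : R[i], normc v = 1 /\ Dset A (v^-1 *: l).
Proof.
move=> [c [w [hw [w0 cw]]]] hl.
pose u i := c i / Complex (normc (c i)) 0.
have hu : forall i, normc (u i) <= 1.
  move=> i; rewrite /u normcM normcV normcR ger0_norm ?normc_ge0 //.
  have [->|h] := eqVneq (normc (c i)) 0; first by rewrite mul0r ler01.
  by rewrite mulfV.
have key : forall i, u i *: nrmz (w i) = nrmz (c i *: w i).
  move=> i; rewrite /nrmz /u cnormZ !scalerA cinvR -mulrA cmulR invfM.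
  by rewrite [in RHS]mulrC.
have hz : cvg_pt (fun i => u i *: nrmz (w i)) l.
  move=> e e0; have [N hN] := cvg_nrmz cw hl e0; exists N => m hm; rewrite key; exact: hN m hm.
have hc : ev (fun i => c i != 0).
  have e2 : (0 : R) < 2^-1 by rewrite invr_gt0.
  have [N hN] := cw _ e2; exists N => m /hN; apply: contraTneq => ->.
  rewrite scale0r sub0r cnormN hl; lra.
have hu1 : ev (fun i => normc (u i) = 1).
  apply: ev_mono hc => i hi; rewrite /u normcM normcV normcR ger0_norm ?normc_ge0 //.
  rewrite mulfV //; apply: contra hi => /eqP h; apply/eqP; exact: eq0_normc.
have [v [f [hf hv]]] := BW2 hu.
have hv1 : normc v = 1.
  case: (eqVneq (normc v) 1) => // hne.
  have p : 0 < `|normc v - 1| by rewrite normr_gt0 subr_eq0.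
  have [N1 h1] := hv _ p; have [N2 h2] := hu1.
  have k1 := h1 (maxn N1 N2) (leq_maxl _ _).
  have k2 := h2 (f (maxn N1 N2)) (leq_trans (leq_maxr _ _) (hf _)).
  have := normc_abs v (u (f (maxn N1 N2))); rewrite k2.
  have e : normc (v - u (f (maxn N1 N2))) = normc (u (f (maxn N1 N2)) - v) by rewrite -normcN opprB.
  rewrite e; lra.
have v0 := normc_neq0 hv1.
exists v; split => //; split.
  by rewrite cnormZ normcV hv1 invr1 mul1r.
exists (fun k => w (f k)); split; first by move=> k; apply: hw.
split; first exact: cvg_comp w0 hf.
apply: (cvg_close (u := fun k => v^-1 *: (u (f k) *: nrmz (w (f k))))).
  exact: cvg_Z (cvg_comp hz hf).
move=> e e0; have [N hN] := hv _ e0; exists N => m /hN hm.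
have hy1 : cnorm (nrmz (w (f m))) = 1 by apply: cnorm_nrmz; exact: (hw (f m)).2.
move: (nrmz (w (f m))) hy1 => y hy1.
have -> : y - v^-1 *: (u (f m) *: y) = v^-1 *: ((v - u (f m)) *: y).
  by rewrite !scalerA mulrBr mulVf // scalerBl scale1r.
rewrite !cnormZ normcV hv1 invr1 mul1r hy1.
by rewrite mulr1 -normcN opprB.
Qed.
End D.
Section E.
Variables (R : realType) (n : nat).
Local Notation pt := 'rV[R[i]]_n.
Implicit Types x y l : pt.

Lemma D_LD (A : pt -> Prop) a : Dset A a -> LDstar A a.
Proof.
move=> [_ [x [hx [x0 hxa]]]].
by exists (fun i => Complex (cnorm (x i))^-1 0), x.
Qed.

Lemma S1D_LD (A : pt -> Prop) a : S1mul (Dset A) a -> LDstar A a.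
Proof.
move=> [c [d [_ [[_ [x [hx [x0 hxd]]]] ->]]]].
exists (fun i => c * Complex (cnorm (x i))^-1 0), x; split => //; split => //.
move=> e e0; have [N hN] := cvg_Z c hxd e0; exists N => m hm.
by rewrite -scalerA; exact: hN.
Qed.

Lemma subr0' x : x - 0 = x. Proof. by rewrite subr0. Qed.

Lemma negl_D (A : pt -> Prop) a b l : (forall m, a m <> 0) -> cvg_pt a 0 ->
  cvg_pt (fun m => nrmz (a m)) l -> cnorm l = 1 -> (forall m, A (b m)) ->
  negligible a b -> Dset A l.
Proof.
move=> a0 ha hal hl hb hneg.
have h2 : (0 : R) < 2^-1 by rewrite invr_gt0.
have [N hN] := hneg _ h2.
have b0 : forall m, (N <= m)%N -> b m <> 0.
  move=> m /hN [h _] e; move: h; rewrite e subr0.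
  have := cnorm_neq0 (a0 m); lra.
split => //; exists (fun k => b (k + N)); split.
  by move=> k; split; [apply: hb | apply: b0; apply: leq_addl].
split.
  apply: (cvg_close (u := fun k => a (k + N))); first exact: cvg_comp ha (fun k => leq_addr N k).
  move=> e e0; have [M hM] := ha _ e0; exists M => k hk.
  have hk' : (M <= k + N)%N by apply: leq_trans hk (leq_addr _ _).
  have := hM _ hk'; rewrite subr0 cnormB; have := (hN (k + N) (leq_addl _ _)).1.
  have := cnorm_ge0 (a (k + N)); lra.
apply: (cvg_close (u := fun k => nrmz (a (k + N)))); first exact: cvg_comp hal (fun k => leq_addr N k).
move=> e e0; have e4 : 0 < e / 4 by rewrite divr_gt0.
have [M hM] := hneg _ e4; exists M => k hk.
have hk' : (M <= k + N)%N by apply: leq_trans hk (leq_addr _ _).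
have [_ h] := hM _ hk'.
have bk := b0 (k + N) (leq_addl _ _).
have := nrmz_close bk (a0 (k + N)) => hc; apply: (le_lt_trans hc).
have cb := cnorm_neq0 bk.
rewrite ltr_pdivrMr // cnormB.
have := cnorm_ge0 (a (k + N) - b (k + N)). nra.
Qed.
End E.
Lemma approach_unit (R : realType) (n : nat) (a : nat -> 'rV[R[i]]_n) l :
  (forall m, a m <> 0) -> cvg_pt (fun m => nrmz (a m)) l -> cnorm l = 1.
Proof. move=> a0 h; apply: (cvg_unit h) => m; exact: cnorm_nrmz. Qed.

Theorem proposition2p41 (R : realType) (n : nat) (A : 'rV[R[i]]_n -> Prop) :
  zero_in_closure A ->
  (CSSP A <-> SSP A /\ (forall a, S1mul (Dset A) a <-> Dset A a)) /\
  (SSP A -> CSSP (S1mul A) /\ CSSP (Cmul A)).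
Proof.
move=> _; split; [split|].
- move=> hC; split.
    move=> a [a0 [ha [l [hl hD]]]]; apply: hC; do 2 split => //.
    by exists l; split => //; apply: D_LD.
  move=> a; split; last first.
    by move=> h; exists 1, a; rewrite normr1 scale1r.
  move=> [c [d [hc [hd ->]]]].
  have hc1 := normc1_of hc; have c0 := normc_neq0 hc1.
  have hd' := hd; move: hd' => [hd1 [x [hx [x0 hxd]]]].
  pose a' := fun m => c *: x m.
  have a0 : forall m, a' m <> 0.
    move=> m; rewrite /a' => /eqP; rewrite scaler_eq0 (negbTE c0) /= => /eqP; exact: (hx m).2.
  have ha : cvg_pt a' 0 by move: (cvg_Z c x0); rewrite scaler0.
  have hal : cvg_pt (fun m => nrmz (a' m)) (c *: d).
    move=> e e0; have [N hN] := cvg_Z c hxd e0; exists N => m hm.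
    by rewrite /a' nrmz_unitZ //; exact: hN.
  have [b [hb hneg]] := hC a' (conj a0 (conj ha (ex_intro _ (c *: d) (conj hal (S1D_LD (ex_intro _ c (ex_intro _ d (conj hc (conj hd erefl))))))))).
  apply: (negl_D a0 ha hal _ hb hneg).
  by rewrite cnormZ hc1 hd1 mul1r.
- move=> [hS hS1] a [a0 [ha [l [hal hl]]]].
  apply: hS; do 2 split => //; exists l; split => //.
  have l1 := approach_unit a0 hal.
  have [v [hv1 hD]] := LD_S1D hl l1.
  apply/hS1; exists v, (v^-1 *: l); split; first by rewrite nC hv1.
  split => //; rewrite scalerA mulfV ?scale1r //; exact: normc_neq0.
move=> hS; split.
- move=> a [a0 [ha [l [hal hl]]]].
  have l1 := approach_unit a0 hal.
  have hlA : LDstar A l.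
    move: hl => [c [w [hw [w0 cw]]]].
    have hx : forall i, exists ux, normc ux.1 = 1 /\ A ux.2 /\ w i = ux.1 *: ux.2.
      move=> i; have [[u [x [hu [hxA ->]]]] _] := hw i.
      by exists (u, x); split => //; apply: normc1_of.
    have [g hg] := choice hx.
    exists (fun i => c i * (g i).1), (fun i => (g i).2); split.
      move=> i; have [_ [hA he]] := hg i; split => // e; apply: (hw i).2.
      by rewrite he e scaler0.
    split.
      move=> e e0; have [N hN] := w0 _ e0; exists N => m /hN.
      have [h1 [_ he]] := hg m; by rewrite he !subr0 cnormZ h1 mul1r.
    move=> e e0; have [N hN] := cw _ e0; exists N => m /hN.
    have [_ [_ he]] := hg m; by rewrite he scalerA.
  have [v [hv1 hD]] := LD_S1D hlA l1.
  have v0 := normc_neq0 hv1.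
  have hvi : normc v^-1 = 1 by rewrite normcV hv1 invr1.
  pose a' := fun m => v^-1 *: a m.
  have a0' : forall m, a' m <> 0.
    move=> m; rewrite /a' => /eqP; rewrite scaler_eq0 invr_eq0 (negbTE v0) /= => /eqP; exact: a0.
  have ha' : cvg_pt a' 0 by move: (cvg_Z v^-1 ha); rewrite scaler0.
  have hal' : cvg_pt (fun m => nrmz (a' m)) (v^-1 *: l).
    move=> e e0; have [N hN] := cvg_Z v^-1 hal e0; exists N => m hm.
    by rewrite /a' nrmz_unitZ //; exact: hN.
  have [b [hb hneg]] := hS a' (conj a0' (conj ha' (ex_intro _ _ (conj hal' hD)))).
  exists (fun m => v *: b m); split.
    move=> m; exists v, (b m); split; first by rewrite nC hv1.
    by [].
  move=> e e0; have [N hN] := hneg _ e0; exists N => m /hN.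
  have ea : a m = v *: a' m by rewrite /a' scalerA mulfV ?scale1r.
  rewrite ea -scalerBr !cnormZ hv1 !mul1r.
  by [].
- move=> a [a0 [ha [l [hal hl]]]].
  have l1 := approach_unit a0 hal.
  move: hl => [c [w [hw [w0 cw]]]].
  have hy : forall i, Cmul A (c i *: w i).
    move=> i; have [[d [x [hx ->]]] _] := hw i.
    by exists (c i * d), x; rewrite scalerA.
  exists (fun m => Complex (cnorm (a m)) 0 *: (c m *: w m)); split.
    move=> m; have [d [x [hx ->]]] := hy m.
    by exists (Complex (cnorm (a m)) 0 * d), x; rewrite scalerA.
  move=> e e0.
  pose d := Num.min (e / 2) 1.
  have d0 : 0 < d by rewrite lt_min divr_gt0 //= ltr01.
  have d1 : d <= e / 2 by rewrite ge_min lexx.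
  have d2 : d <= 1 by rewrite ge_min lexx orbT.
  have d20 : 0 < d / 2 by rewrite divr_gt0.
  have [N hN] := ev_and (hal _ d20) (cw _ d20).
  exists N => m /hN [h1 h2].
  set y := c m *: w m in h2 *; clearbody y.
  have hdiff : cnorm (nrmz (a m) - y) < d.
    have -> : nrmz (a m) - y = (nrmz (a m) - l) + (l - y) by rewrite addrA subrK.
    apply: (le_lt_trans (cnormD _ _)); rewrite (cnormB l); lra.
  have hyl : 1 - d / 2 <= cnorm y.
    have := cnorm_lb l y; rewrite cnormB l1; lra.
  have ea : a m - Complex (cnorm (a m)) 0 *: y = Complex (cnorm (a m)) 0 *: (nrmz (a m) - y).
    by rewrite scalerBr -nrmz_split.
  rewrite ea !cnormZ normcR ger0_norm ?cnorm_ge0 //.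
  have A0 := cnorm_ge0 (a m).
  have k1 : cnorm (nrmz (a m) - y) <= e by lra.
  have k2 : cnorm (nrmz (a m) - y) <= e * cnorm y.
    have : e / 2 <= e * cnorm y by nra.
    lra.
  split; nra.
Qed.
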